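(* Let $A$ be a noetherian UFD, let $(a,b)\in A^2$, and let $A'=A[X]/(aX-b)$, where $A[X]$ is a polynomial ring in one variable over $A$. Assume: (i) $a,b$ are nonzero and relatively prime (i.e. $aA\cap bA=abA$), and $a$ is either a unit or a product of prime elements of $A$; (ii) $pA+bA$ is a prime ideal of $A$ for every prime element $p$ of $A$ such that $a\in pA$ and $pA+bA\neq A$. Then $A'$ is a noetherian UFD. *)

(* Defs.v *)
From HB Require Import structures.
From mathcomp Require Import all_boot all_order all_algebra.
Set Implicit Arguments. Unset Strict Implicit. Unset Printing Implicit Defensive.
Import GRing.Theory.
Local Open Scope ring_scope.

Section RingNotions.
Variable R : comNzRingType.

Definition unitP (x : R) : Prop := exists y : R, x * y = 1.

Definition divides (x y : R) : Prop := exists z : R, y = x * z.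

Definition is_domain : Prop :=
  (1 : R) <> 0 /\ forall x y : R, x * y = 0 -> x = 0 \/ y = 0.

Definition is_ideal (I : R -> Prop) : Prop :=
  [/\ I 0, (forall x y, I x -> I y -> I (x + y)) & (forall r x, I x -> I (r * x))].

Definition gen_ideal (s : seq R) (x : R) : Prop :=
  exists c : 'I_(size s) -> R, x = \sum_(i < size s) c i * s`_i.

Definition noetherian : Prop :=
  forall I : R -> Prop, is_ideal I -> exists s : seq R, forall x, I x <-> gen_ideal s x.

Definition prime_ideal (P : R -> Prop) : Prop :=
  [/\ is_ideal P, ~ P 1 & forall x y, P (x * y) -> P x \/ P y].

Definition prime_elt (p : R) : Prop :=
  [/\ p <> 0, ~ unitP p & forall x y, divides p (x * y) -> divides p x \/ divides p y].

Definition irreducible_elt (p : R) : Prop :=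
  [/\ p <> 0, ~ unitP p & forall x y, p = x * y -> unitP x \/ unitP y].

Definition associated (x y : R) : Prop := exists u : R, unitP u /\ y = u * x.

Definition UFD : Prop :=
  [/\ is_domain,
      (forall x : R, x <> 0 -> ~ unitP x ->
         exists s : seq R, (forall p, p \in s -> irreducible_elt p) /\
                           x = \prod_(p <- s) p)
    & (forall s t : seq R,
         (forall p, p \in s -> irreducible_elt p) ->
         (forall p, p \in t -> irreducible_elt p) ->
         \prod_(p <- s) p = \prod_(p <- t) p ->
         exists t' : seq R, perm_eq t' t /\ size s = size t' /\
           forall i, (i < size s)%N -> associated (nth 0 s i) (nth 0 t' i))].

End RingNotions.

(* Main.v *)
Require Import Defs.
From HB Require Import structures.
From mathcomp Require Import all_boot all_order all_algebra.
From mathcomp Require Import zify ring.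
From Stdlib Require Import Classical ClassicalEpsilon.
Import GRing.Theory.
Local Open Scope ring_scope.
Set Implicit Arguments. Unset Strict Implicit. Unset Printing Implicit Defensive.


Section Gen.
Variable R : comNzRingType.
Implicit Types x y z u p q : R.

Lemma z_dvd_refl x : divides x x. Proof. by exists 1; rewrite mulr1. Qed.
Lemma z_dvd_trans x y z : divides x y -> divides y z -> divides x z.
Proof. by move=> [u ->] [v ->]; exists (u * v); rewrite mulrA. Qed.
Lemma z_dvd_mulr x y z : divides x y -> divides x (y * z).
Proof. by move=> [u ->]; exists (u * z); rewrite mulrA. Qed.
Lemma z_dvd_mull x y z : divides x y -> divides x (z * y).
Proof. by rewrite mulrC; apply: z_dvd_mulr. Qed.
Lemma z_dvd_mul_r x y : divides x (x * y). Proof. by exists y. Qed.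
Lemma z_dvd_mul_l x y : divides x (y * x). Proof. by exists y; rewrite mulrC. Qed.
Lemma z_dvd_add x y z : divides x y -> divides x z -> divides x (y + z).
Proof. by move=> [u ->] [v ->]; exists (u + v); rewrite mulrDr. Qed.
Lemma z_dvd_opp x y : divides x y -> divides x (- y).
Proof. by move=> [u ->]; exists (- u); rewrite mulrN. Qed.
Lemma z_dvd0 x : divides x 0. Proof. by exists 0; rewrite mulr0. Qed.
Lemma z_dvd_mul2 x y z w : divides x y -> divides z w -> divides (x * z) (y * w).
Proof. by move=> [u ->] [v ->]; exists (u * v); rewrite mulrACA. Qed.

Lemma z_unit1 : unitP (1 : R). Proof. by exists 1; rewrite mulr1. Qed.
Lemma z_unitM x y : unitP x -> unitP y -> unitP (x * y).
Proof. by move=> [u hu] [v hv]; exists (u * v); rewrite mulrACA hu hv mulr1. Qed.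
Lemma z_unit_dvd1 x : unitP x <-> divides x 1.
Proof. by split=> [[u hu]|[u hu]]; exists u. Qed.
Lemma z_unit_dvd x y : unitP x -> divides x y.
Proof. by move=> [u hu]; exists (u * y); rewrite mulrA hu mul1r. Qed.
Lemma z_dvd_unit x y : divides x y -> unitP y -> unitP x.
Proof. by move=> [u ->] [v hv]; exists (u * v); rewrite mulrA. Qed.
Lemma z_unitMl x y : unitP (x * y) -> unitP x.
Proof. by move=> h; apply: z_dvd_unit h; apply: z_dvd_mul_r. Qed.
Lemma z_unitMr x y : unitP (x * y) -> unitP y.
Proof. by rewrite mulrC; apply: z_unitMl. Qed.

Hypothesis dom : is_domain R.

Lemma z_mul_eq0 x y : x * y = 0 -> x = 0 \/ y = 0.
Proof. by case: dom => _; apply. Qed.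
Lemma z_mul_neq0 x y : x <> 0 -> y <> 0 -> x * y <> 0.
Proof. by move=> hx hy /z_mul_eq0 [] //. Qed.
Lemma z_one_neq0 : (1 : R) <> 0. Proof. by case: dom. Qed.
Lemma z_unit_neq0 x : unitP x -> x <> 0.
Proof. by move=> [u hu] x0; apply: z_one_neq0; rewrite -hu x0 mul0r. Qed.
Lemma z_mulIf x y z : x <> 0 -> x * y = x * z -> y = z.
Proof.
move=> hx e; have : x * (y - z) = 0 by rewrite mulrBr e subrr.
by case/z_mul_eq0 => // /eqP; rewrite subr_eq0 => /eqP.
Qed.

Lemma z_prime_irr p : prime_elt p -> irreducible_elt p.
Proof.
case=> p0 pu pp; split=> // x y e.
have : divides p (x * y) by rewrite -e; apply: z_dvd_refl.
case/pp=> [[w ew]|[w ew]].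
- right; exists w; apply: (z_mulIf p0).
  by rewrite mulr1 mulrCA -ew mulrC -e.
- left; exists w; apply: (z_mulIf p0).
  by rewrite mulr1 mulrCA -ew -e.
Qed.

Lemma z_prime_assoc u p : unitP u -> prime_elt p -> prime_elt (u * p).
Proof.
move=> [v hv] [p0 pu pp]; split.
- by apply: z_mul_neq0 => //; apply: z_unit_neq0; exists v.
- by move=> /z_unitMr.
- move=> x y [w e].
  have : divides p (x * y) by exists (u * w); rewrite e mulrA [p * u]mulrC.
  have h z : divides p z -> divides (u * p) z.
    by move=> [t ->]; exists (v * t); rewrite mulrACA hv mul1r.
  by case/pp => ?; [left|right]; apply: h.
Qed.

Lemma z_irr_assoc u p : unitP u -> irreducible_elt p -> irreducible_elt (u * p).
Proof.
move=> [v hv] [p0 pu pp]; split.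
- by apply: z_mul_neq0 => //; apply: z_unit_neq0; exists v.
- by move=> /z_unitMr.
- move=> x y e.
  have : p = (v * x) * y by rewrite -mulrA -e mulrA [v * u]mulrC hv mul1r.
  case/pp => h; [left|by right].
  by apply: (@z_unitMr v); apply: h.
Qed.

Lemma z_mem_dvd_prod s x : x \in s -> divides x (\prod_(q <- s) q).
Proof.
elim: s => // y s IH; rewrite inE big_cons => /orP [/eqP ->|/IH h].
- by apply: z_dvd_mul_r.
- by apply: z_dvd_mull.
Qed.

Lemma z_prime_dvd_prod p s : prime_elt p -> divides p (\prod_(q <- s) q) ->
  exists2 q, q \in s & divides p q.
Proof.
move=> pp; elim: s => [|y s IH]; rewrite ?big_nil ?big_cons.
- by move=> /z_unit_dvd1 h; case: pp => _ /(_ h).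
- case: (pp) => _ _ /[apply] -[h|/IH [q qs h]].
  + by exists y; rewrite ?inE ?eqxx.
  + by exists q; rewrite // inE qs orbT.
Qed.

End Gen.


Lemma z_nat_min (Q : nat -> Prop) : (exists n, Q n) -> exists n, Q n /\ forall m, (m < n)%N -> ~ Q m.
Proof.
move=> [n qn]; apply: NNPP => H; move: qn; elim/ltn_ind: n => n IH qn.
by apply: H; exists n; split=> // m lt qm; exact: IH m lt qm.
Qed.

Section Ideals.
Variable R : comNzRingType.
Implicit Types (x y z u p q d : R) (s t : seq R).

Lemma z_ideal_sum (J : R -> Prop) (I : Type) (r : seq I) (P : pred I) (F : I -> R) :
  is_ideal J -> (forall i, P i -> J (F i)) -> J (\sum_(i <- r | P i) F i).
Proof. by case=> J0 JD JM h; apply: big_ind. Qed.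

Lemma z_ideal_opp (J : R -> Prop) x : is_ideal J -> J x -> J (- x).
Proof. by case=> _ _ JM h; rewrite -mulN1r; apply: JM. Qed.

Lemma z_ideal_sub (J : R -> Prop) x y : is_ideal J -> J x -> J y -> J (x - y).
Proof. by move=> hJ hx hy; case: (hJ) => _ JD _; apply: JD => //; apply: z_ideal_opp. Qed.

Lemma z_ideal_mulr (J : R -> Prop) x r : is_ideal J -> J x -> J (x * r).
Proof. by case=> _ _ JM h; rewrite mulrC; apply: JM. Qed.

Lemma z_gen_ideal_ideal s : is_ideal (gen_ideal s).
Proof.
split.
- by exists (fun _ => 0); rewrite big1 // => i _; rewrite mul0r.
- move=> x y [c1 ->] [c2 ->]; exists (fun i => c1 i + c2 i).
  by rewrite -big_split; apply: eq_bigr => i _; rewrite mulrDl.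
- move=> r x [c ->]; exists (fun i => r * c i).
  by rewrite mulr_sumr; apply: eq_bigr => i _; rewrite mulrA.
Qed.

Lemma z_gen_ideal_mem s x : x \in s -> gen_ideal s x.
Proof.
move=> xs; have h : (index x s < size s)%N by rewrite index_mem.
exists (fun j => ((j == Ordinal h) : bool)%:R).
rewrite (bigD1 (Ordinal h)) //= eqxx mul1r big1 ?addr0 ?nth_index //.
by move=> j /negbTE ->; rewrite mul0r.
Qed.

Lemma z_gen_ideal_min s (J : R -> Prop) : is_ideal J -> (forall x, x \in s -> J x) ->
  forall x, gen_ideal s x -> J x.
Proof.
move=> hJ hs x [c ->]; apply: z_ideal_sum => // i _.
by case: hJ => _ _ JM; apply: JM; apply: hs; apply: mem_nth.
Qed.

Lemma z_gen_ideal_catl s t x : gen_ideal s x -> gen_ideal (s ++ t) x.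
Proof.
apply: z_gen_ideal_min; first exact: z_gen_ideal_ideal.
by move=> y ys; apply: z_gen_ideal_mem; rewrite mem_cat ys.
Qed.

Lemma z_gen_ideal_catr s t x : gen_ideal t x -> gen_ideal (s ++ t) x.
Proof.
apply: z_gen_ideal_min; first exact: z_gen_ideal_ideal.
by move=> y ys; apply: z_gen_ideal_mem; rewrite mem_cat ys orbT.
Qed.

Lemma z_dvd_ideal d : is_ideal (divides d).
Proof.
split; first exact: z_dvd0.
- by move=> x y; apply: z_dvd_add.
- by move=> r x; apply: z_dvd_mull.
Qed.

End Ideals.


Section Fact.
Variable R : comNzRingType.
Implicit Types (x y z u p q d : R) (s t : seq R).
Hypothesis dom : is_domain R.

Lemma uniq_fact (irrp : forall p, irreducible_elt p -> prime_elt p) s :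
  forall t u, (forall p, p \in s -> irreducible_elt p) ->
  (forall p, p \in t -> irreducible_elt p) -> unitP u ->
  \prod_(p <- s) p = u * \prod_(p <- t) p ->
  exists t' : seq R, perm_eq t' t /\ size s = size t' /\
           forall i, (i < size s)%N -> associated (nth 0 s i) (nth 0 t' i).
Proof.
elim: s => [|p s IH] t u hs ht hu e.
- case: t ht e => [|q t] ht e; first by exists [::].
  exfalso; have qi : irreducible_elt q by apply: ht; apply: mem_head.
  case: qi => _ qu _; apply: qu.
  exists (u * \prod_(r <- t) r); rewrite big_nil big_cons in e.
  by rewrite mulrCA -e.
- have pi : irreducible_elt p by apply: hs; apply: mem_head.
  have pp := irrp _ pi.
  have : divides p (u * \prod_(r <- t) r) by rewrite -e big_cons; apply: z_dvd_mul_r.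
  case: (pp) => p0 pu /[apply] -[/z_dvd_unit/(_ hu)//|].
  move=> /(z_prime_dvd_prod pp) [q qt [w ew]].
  have [qi0 qiu qii] := ht q qt.
  have wu : unitP w by case: (qii _ _ ew).
  have et := perm_to_rem qt.
  have e2 : \prod_(r <- s) r = (u * w) * \prod_(r <- rem q t) r.
    have et2 : \prod_(r <- t) r = q * \prod_(r <- rem q t) r.
      by rewrite (perm_big _ et) big_cons.
    apply: (z_mulIf dom p0); move: e; rewrite big_cons et2 => ->.
    by rewrite ew !mulrA [u * p]mulrC.
  have hs' : forall r, r \in s -> irreducible_elt r.
    by move=> r rs; apply: hs; rewrite inE rs orbT.
  have ht' : forall r, r \in rem q t -> irreducible_elt r.
    by move=> r /mem_rem; apply: ht.
  have [t'' [pt [sz ha]]] := IH (rem q t) (u * w) hs' ht' (z_unitM hu wu) e2.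
  exists (q :: t''); split; last split.
  + by rewrite (permPr et) perm_cons.
  + by rewrite /= sz.
  + case=> [|i] /= hi; last by apply: ha.
    by exists w; rewrite ew mulrC.
Qed.

Lemma fact_exists (noeth : noetherian R) : forall x : R, x <> 0 -> ~ unitP x ->
  exists s, (forall p, p \in s -> irreducible_elt p) /\ x = \prod_(p <- s) p.
Proof.
pose hasf x := exists s, (forall p, p \in s -> irreducible_elt p) /\ x = \prod_(p <- s) p.
pose bad x := [/\ x <> 0, ~ unitP x & ~ hasf x].
have step x : bad x -> exists y, [/\ bad y, divides y x & ~ divides x y].
  case=> x0 xu xf.
  have : ~ irreducible_elt x.
    by move=> xi; apply: xf; exists [:: x]; split; [move=> p; rewrite inE => /eqP ->|rewrite big_seq1].
  move=> nxi; have [y [z [e yu zu]]] : exists y z, [/\ x = y * z, ~ unitP y & ~ unitP z].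
    apply: NNPP => H; apply: nxi; split => // y z e; apply: NNPP => H2; apply: H.
    exists y, z; split => //.
    - by move=> h; apply: H2; left.
    - by move=> h; apply: H2; right.
  have y0 : y <> 0 by move=> y0; apply: x0; rewrite e y0 mul0r.
  have z0 : z <> 0 by move=> z0; apply: x0; rewrite e z0 mulr0.
  case: (classic (hasf y)) => [[sy [hy ey]]|nfy].
  + case: (classic (hasf z)) => [[sz [hz ez]]|nfz].
    * exfalso; apply: xf; exists (sy ++ sz); split; last by rewrite big_cat /= -ey -ez.
      by move=> p; rewrite mem_cat => /orP [/hy|/hz].
    * exists z; split => //; first by exists y; rewrite e mulrC.
      move=> [w ew]; apply: yu; exists w; apply: (z_mulIf dom z0).
      by rewrite mulr1 mulrA [z * y]mulrC -e -ew.
  + exists y; split => //; first by exists z.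
    move=> [w ew]; apply: zu; exists w; apply: (z_mulIf dom y0).
    by rewrite mulr1 mulrA -e -ew.
move=> x x0 xu; apply: NNPP => nf.
have bx : bad x by [].
have [g hg] : exists g : R -> R, forall x, bad x -> [/\ bad (g x), divides (g x) x & ~ divides x (g x)].
  have H x1 : exists y, bad x1 -> [/\ bad y, divides y x1 & ~ divides x1 y].
    case: (classic (bad x1)) => [/step [y hy]|nb]; first by exists y.
    by exists x1.
  exists (fun x1 => proj1_sig (constructive_indefinite_description _ (H x1))).
  by move=> x1; case: (constructive_indefinite_description _ (H x1)).
pose v n := iter n g x.
have vb n : bad (v n) by elim: n => //= n IH; case: (hg _ IH).
have vd n k : divides (v (n + k)%N) (v n).
  elim: k => [|k IH]; first by rewrite addn0; apply: z_dvd_refl.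
  by rewrite addnS; apply: z_dvd_trans IH; case: (hg _ (vb (n + k)%N)).
have vd' n m : (n <= m)%N -> divides (v m) (v n).
  by move=> /subnKC <-; apply: vd.
pose J y := exists n, divides (v n) y.
have JI : is_ideal J.
  split; first by exists 0%N; apply: z_dvd0.
  - move=> y1 y2 [n1 h1] [n2 h2]; exists (maxn n1 n2); apply: z_dvd_add.
    + by apply: z_dvd_trans h1; apply: vd'; rewrite leq_maxl.
    + by apply: z_dvd_trans h2; apply: vd'; rewrite leq_maxr.
  - by move=> r y [n h]; exists n; apply: z_dvd_mull.
have [s hs] := noeth J JI.
have [N hN] : exists N, forall y, y \in s -> divides (v N) y.
  have : forall y, y \in s -> J y by move=> y ys; apply/hs; apply: z_gen_ideal_mem.
  elim: s {hs} => [|y s IH] hs'; first by exists 0%N.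
  have [|N hN] := IH; first by move=> z zs; apply: hs'; rewrite inE zs orbT.
  have [n hn] := hs' y (mem_head _ _).
  exists (maxn n N) => z; rewrite inE => /orP [/eqP ->|zs].
  + by apply: z_dvd_trans hn; apply: vd'; rewrite leq_maxl.
  + by apply: z_dvd_trans (hN _ zs); apply: vd'; rewrite leq_maxr.
have : J (v N.+1) by exists N.+1; apply: z_dvd_refl.
move=> /hs /(z_gen_ideal_min (z_dvd_ideal _) hN).
by case: (hg _ (vb N)).
Qed.

Lemma ufd_irr_prime (U : UFD R) p : irreducible_elt p -> prime_elt p.
Proof.
case: U => _ fex fun_ pi; case: (pi) => p0 pu _; split => // x y [z e].
case: (classic (x = 0)) => [->|x0]; first by left; apply: z_dvd0.
case: (classic (y = 0)) => [->|y0]; first by right; apply: z_dvd0.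
case: (classic (unitP x)) => [[v hv]|xu].
  by right; exists (v * z); rewrite mulrCA -e mulrA [v * x]mulrC hv mul1r.
case: (classic (unitP y)) => [[v hv]|yu].
  by left; exists (v * z); rewrite mulrCA -e mulrCA [v * y]mulrC hv mulr1.
have z0 : z <> 0 by move=> z0; apply: (z_mul_neq0 dom x0 y0); rewrite e z0 mulr0.
have [sx [hx ex]] := fex x x0 xu.
have [sy [hy ey]] := fex y y0 yu.
have [tz [htz [etz [q [qt [w [wu ew]]]]]]] : exists tz, [/\ forall r, r \in tz -> irreducible_elt r,
   p * z = \prod_(r <- tz) r & exists q, q \in tz /\ exists w, unitP w /\ q = w * p].
  case: (classic (unitP z)) => [zu|nzu].
  - exists [:: z * p]; split; first by move=> r; rewrite inE => /eqP ->; apply: z_irr_assoc.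
    + by rewrite big_seq1 mulrC.
    + by exists (z * p); split; [apply: mem_head|exists z].
  - have [sz [hz ez]] := fex z z0 nzu.
    exists (p :: sz); split.
    + by move=> r; rewrite inE => /orP [/eqP ->|/hz].
    + by rewrite big_cons ez.
    + by exists p; split; [apply: mem_head|exists 1; split; [apply: z_unit1|rewrite mul1r]].
have := fun_ (sx ++ sy) tz _ htz.
case.
- by move=> r; rewrite mem_cat => /orP [/hx|/hy].
- by rewrite big_cat /= -ex -ey e.
move=> t' [pt [sz ha]].
have qt' : q \in t' by rewrite (perm_mem pt).
have ilt : (index q t' < size (sx ++ sy))%N by rewrite sz index_mem.
have [w' [[w'' hw''] ew']] := ha _ ilt.
rewrite nth_index // in ew'.
set r := nth 0 (sx ++ sy) (index q t') in ew'.
have pr : divides p r.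
  by exists (w'' * w); rewrite mulrCA [p * w]mulrC -ew ew' mulrA [w'' * w']mulrC hw'' mul1r.
have : r \in sx ++ sy by apply: mem_nth.
rewrite mem_cat => /orP [rs|rs].
- by left; apply: z_dvd_trans pr _; rewrite ex; apply: z_mem_dvd_prod.
- by right; apply: z_dvd_trans pr _; rewrite ey; apply: z_mem_dvd_prod.
Qed.

End Fact.


Section HBT.
Variable A : comNzRingType.
Hypothesis noeth : noetherian A.

Definition Lc (J : {poly A} -> Prop) n (c : A) :=
  exists q, [/\ J q, (size q <= n.+1)%N & q`_n = c].

Lemma Lc_ideal J n : is_ideal J -> is_ideal (Lc J n).
Proof.
move=> hJ; case: (hJ) => J0 JD JM; split.
- by exists 0; rewrite size_poly0 coef0.
- move=> x y [q1 [h1 s1 c1]] [q2 [h2 s2 c2]]; exists (q1 + q2); split; first by apply: JD.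
  + by apply: leq_trans (size_polyD _ _) _; rewrite geq_max s1 s2.
  + by rewrite coefD c1 c2.
- move=> r x [q [h s c]]; exists (r%:P * q); split; first by apply: JM.
  + by rewrite mul_polyC; apply: leq_trans (size_scale_leq _ _) _.
  + by rewrite coefCM c.
Qed.

Lemma Lc_step J n c : is_ideal J -> Lc J n c -> Lc J n.+1 c.
Proof.
move=> hJ [q [h s e]]; exists (q * 'X); split; first by apply: z_ideal_mulr.
- apply/leq_sizeP => j hj; rewrite coefMX; case: ifP => // _.
  by move/leq_sizeP: s; apply; rewrite -ltnS prednK // (leq_trans _ hj).
- by rewrite coefMX.
Qed.

Lemma Lc_mono J n m c : is_ideal J -> (n <= m)%N -> Lc J n c -> Lc J m c.
Proof.
move=> hJ /subnKC <-; elim: (m - n)%N => [|k IH] h; first by rewrite addn0.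
by rewrite addnS; apply: Lc_step => //; apply: IH.
Qed.

Lemma Lc_sub (J J' : {poly A} -> Prop) n c : (forall q, J q -> J' q) -> Lc J n c -> Lc J' n c.
Proof. by move=> h [q [hq s e]]; exists q; split => //; apply: h. Qed.

Section I.
Variable I : {poly A} -> Prop.
Hypothesis hI : is_ideal I.

Lemma Lc_bound : exists N, forall m c, (N <= m)%N -> Lc I m c -> Lc I N c.
Proof.
pose U c := exists n, Lc I n c.
have UI : is_ideal U.
  split; first by exists 0%N; case: (Lc_ideal 0 hI).
  - move=> x y [n1 h1] [n2 h2]; exists (maxn n1 n2).
    case: (Lc_ideal (maxn n1 n2) hI) => _ D _; apply: D.
    + by apply: (Lc_mono hI _ h1); rewrite ?leq_maxl ?leq_maxr.
    + by apply: (Lc_mono hI _ h2); rewrite ?leq_maxl ?leq_maxr.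
  - by move=> r x [n h]; exists n; case: (Lc_ideal n hI) => _ _ M; apply: M.
have [s hs] := noeth UI.
have [N hN] : exists N, forall c, c \in s -> Lc I N c.
  have : forall c, c \in s -> U c by move=> c cs; apply/hs; apply: z_gen_ideal_mem.
  elim: s {hs} => [|y s IH] hs'; first by exists 0%N.
  have [|N hN] := IH; first by move=> z zs; apply: hs'; rewrite inE zs orbT.
  have [n hn] := hs' y (mem_head _ _).
  exists (maxn n N) => z; rewrite inE => /orP [/eqP ->|zs].
  + by apply: (Lc_mono hI _ hn); rewrite leq_maxl.
  + by apply: (Lc_mono hI _ (hN _ zs)); rewrite leq_maxr.
exists N => m c _ h.
have : U c by exists m.
by move/hs; apply: z_gen_ideal_min => //; apply: Lc_ideal.
Qed.

Lemma Lc_witness n : exists H, (forall h, h \in H -> I h) /\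
  forall c, Lc I n c -> Lc (gen_ideal H) n c.
Proof.
have [t ht] := noeth (Lc_ideal n hI).
have [H [hH1 hH2]] : exists H, (forall h, h \in H -> I h) /\
    forall c, c \in t -> Lc (gen_ideal H) n c.
  have : forall c, c \in t -> Lc I n c by move=> c ct; apply/ht; apply: z_gen_ideal_mem.
  elim: t {ht} => [|c t IH] ht'; first by exists [::].
  have [|H [h1 h2]] := IH; first by move=> z zs; apply: ht'; rewrite inE zs orbT.
  have [q [hq sq eq]] := ht' c (mem_head _ _).
  exists (q :: H); split.
  + by move=> h; rewrite inE => /orP [/eqP ->|/h1].
  + move=> z; rewrite inE => /orP [/eqP ->|zs].
    * by exists q; split => //; apply: z_gen_ideal_mem; apply: mem_head.
    * by apply: Lc_sub (h2 _ zs) => x; apply: (z_gen_ideal_catr [:: q]).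
exists H; split => // c /ht; apply: z_gen_ideal_min => //.
by apply: Lc_ideal; apply: z_gen_ideal_ideal.
Qed.

Lemma Lc_witness_all N : exists G, (forall h, h \in G -> I h) /\
  forall n c, (n <= N)%N -> Lc I n c -> Lc (gen_ideal G) n c.
Proof.
elim: N => [|N [G [hG1 hG2]]].
- have [H [h1 h2]] := Lc_witness 0.
  by exists H; split => // n c; rewrite leqn0 => /eqP ->; apply: h2.
- have [H [h1 h2]] := Lc_witness N.+1.
  exists (G ++ H); split.
  + by move=> h; rewrite mem_cat => /orP [/hG1|/h1].
  + move=> n c; rewrite leq_eqVlt => /orP [/eqP ->|hn] hc.
    * by apply: Lc_sub (h2 _ hc) => x; apply: z_gen_ideal_catr.
    * by apply: Lc_sub (hG2 _ _ hn hc) => x; apply: z_gen_ideal_catl.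
Qed.

Lemma hbt_ideal : exists s, forall x, I x <-> gen_ideal s x.
Proof.
have [N hN] := Lc_bound.
have [G [hG1 hG2]] := Lc_witness_all N.
have GI : forall q, gen_ideal G q -> I q by apply: z_gen_ideal_min.
have GJ := z_gen_ideal_ideal G.
exists G => q; split; last exact: GI.
have main m : forall q, I q -> (size q <= m)%N -> gen_ideal G q.
  elim: m => [|m IH] {}q hq sq.
    move: sq; rewrite leqn0 size_poly_eq0 => /eqP ->; by case: GJ.
  have hL : Lc I (minn m N) q`_m.
    have h0 : Lc I m q`_m by exists q.
    case: (leqP m N) => hmN.
    + by [].
    + by apply: hN h0; apply: ltnW.
  have [g [hg sg eg]] := hG2 _ _ (geq_minr m N) hL.
  set n := minn m N in hL sg eg.
  have nm : (n <= m)%N by apply: geq_minl.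
  pose h := g * 'X^(m - n).
  have hh : gen_ideal G h by apply: z_ideal_mulr.
  have hm : h`_m = q`_m.
    by rewrite /h coefMXn ltnNge leq_subr /= subKn.
  have hs : (size h <= m.+1)%N.
    apply/leq_sizeP => j hj; rewrite /h coefMXn; case: ifP => // hj2.
    move/leq_sizeP: sg; apply.
    move: hj hj2 nm; clear; lia.
  have : gen_ideal G (q - h).
    apply: IH; first by apply: z_ideal_sub => //; apply: GI.
    apply/leq_sizeP => j; rewrite leq_eqVlt => /orP [/eqP <-|hj].
    + by rewrite coefB hm subrr.
    + rewrite coefB; move/leq_sizeP: sq => -> //; move/leq_sizeP: hs => -> //.
      by rewrite subrr.
  move=> hq'; have -> : q = (q - h) + h by rewrite subrK.
  by case: GJ => _ D _; apply: D.
by move=> hq; apply: (main (size q)).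
Qed.

End I.

Lemma hbt : noetherian {poly A}.
Proof. by move=> I hI; apply: hbt_ideal. Qed.

End HBT.


Lemma gauss_prime (R : comNzRingType) (P : R -> Prop) (p q : {poly R}) :
  prime_ideal P -> (forall i, P (p * q)`_i) -> (forall i, P p`_i) \/ (forall i, P q`_i).
Proof.
move=> [hP P1 Pp] H; apply: NNPP => nH.
have [i [ni mi]] : exists i, ~ P p`_i /\ forall m, (m < i)%N -> ~ ~ P p`_m.
  apply: z_nat_min; apply: NNPP => h; apply: nH; left => i0; apply: NNPP => hi; apply: h.
  by exists i0.
have [j [nj mj]] : exists j, ~ P q`_j /\ forall m, (m < j)%N -> ~ ~ P q`_m.
  apply: z_nat_min; apply: NNPP => h; apply: nH; right => i0; apply: NNPP => hi; apply: h.
  by exists i0.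
have := H (i + j)%N; rewrite coefM.
have hi : (i < (i + j).+1)%N by rewrite ltnS leq_addr.
rewrite (bigD1 (Ordinal hi)) //= addKn.
set rest := \sum_(k < _ | _) _.
have Pr : P rest.
  apply: z_ideal_sum => // k /eqP hk.
  case: (ltngtP k i) => hki.
  - by apply: z_ideal_mulr => //; apply: NNPP; apply: mi.
  - case: hP => _ _ JM; apply: JM; apply: NNPP; apply: mj.
    by have := ltn_ord k; move: hki; clear; lia.
  - by exfalso; apply: hk; apply: val_inj.
move=> Ps.
have : P (p`_i * q`_j).
  have -> : p`_i * q`_j = (p`_i * q`_j + rest) - rest by rewrite addrK.
  by apply: z_ideal_sub.
by case/Pp.
Qed.


Lemma coef_dvd_poly (A : comNzRingType) (c : A) (p : {poly A}) :
  (forall i, divides c p`_i) -> exists p', p = c%:P * p'.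
Proof.
elim/poly_ind: p => [|p d IH] H; first by exists 0; rewrite mulr0.
have [|p' ep] := IH.
  by move=> i; have := H i.+1; rewrite coefD coefMX coefC /=; rewrite addr0.
have := H 0%N; rewrite coefD coefMX coefC /= add0r => -[z ez].
by exists (p' * 'X + z%:P); rewrite mulrDr mulrA -ep ez polyCM.
Qed.

Lemma coef_comb_poly (A : comNzRingType) (c e : A) (p : {poly A}) :
  (forall i, exists u v, p`_i = c * u + e * v) ->
  exists U V, p = c%:P * U + e%:P * V.
Proof.
elim/poly_ind: p => [|p d IH] H; first by exists 0, 0; rewrite !mulr0 addr0.
have [|U [V ep]] := IH.
  by move=> i; have := H i.+1; rewrite coefD coefMX coefC /= addr0.
have := H 0%N; rewrite coefD coefMX coefC /= add0r => -[u [v ev]].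
exists (U * 'X + u%:P), (V * 'X + v%:P).
rewrite ep ev !mulrDr !polyCD !polyCM !mulrA mulrDl.
by rewrite addrACA.
Qed.

Section Main.
Variable A : comNzRingType.
Variables a b : A.
Hypothesis Adom : is_domain A.
Hypothesis a0 : a <> 0.
Hypothesis b0 : b <> 0.
Hypothesis cop : forall x : A, (divides a x /\ divides b x) <-> divides (a * b) x.
Variable B : comNzRingType.
Variable f : {rmorphism {poly A} -> B}.
Hypothesis fsurj : forall y : B, exists q : {poly A}, f q = y.
Hypothesis fker : forall q : {poly A}, f q = 0 <-> exists r : {poly A}, q = r * (a%:P * 'X - b%:P).

Definition io (c : A) : B := f c%:P.
Definition xx : B := f 'X.

Lemma ioD c d : io (c + d) = io c + io d. Proof. by rewrite /io polyCD rmorphD. Qed.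
Lemma ioB c d : io (c - d) = io c - io d. Proof. by rewrite /io polyCB rmorphB. Qed.
Lemma ioM c d : io (c * d) = io c * io d. Proof. by rewrite /io polyCM rmorphM. Qed.
Lemma io1 : io 1 = 1. Proof. by rewrite /io rmorph1. Qed.
Lemma io0 : io 0 = 0. Proof. by rewrite /io rmorph0. Qed.
Lemma ioX c n : io (c ^+ n) = io c ^+ n. Proof. by rewrite /io rmorphXn rmorphXn. Qed.
Lemma io_prod (s : seq A) : io (\prod_(p <- s) p) = \prod_(p <- s) io p.
Proof.
elim: s => [|p s IH]; first by rewrite !big_nil io1.
by rewrite !big_cons ioM IH.
Qed.

Lemma axb : io a * xx = io b.
Proof.
have := proj2 (fker (a%:P * 'X - b%:P)) (ex_intro _ 1 (esym (mul1r _))).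
by rewrite rmorphB rmorphM => /eqP; rewrite subr_eq0 => /eqP.
Qed.

Lemma ker_coef q r i : q = r * (a%:P * 'X - b%:P) ->
  q`_i = (if i == 0%N then 0 else r`_(i.-1)) * a - r`_i * b.
Proof.
move=> ->; rewrite mulrBr coefB mulrA coefMX coefMC.
by case: (i == 0%N); rewrite ?mul0r // coefMC.
Qed.

Lemma io_eq0 c : io c = 0 -> c = 0.
Proof.
move=> /fker [r e].
case: (eqVneq r 0) => [r0|rn0].
  by move: e; rewrite r0 mul0r => /eqP; rewrite polyC_eq0 => /eqP.
have := ker_coef (size r) e.
rewrite coefC; have -> : (size r == 0%N) = false by apply/negbTE; rewrite size_poly_eq0.
have -> : r`_(size r) = 0 by apply: nth_default.
rewrite mul0r subr0 => /esym /(z_mul_eq0 Adom) [h|//].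
exfalso; move/negP: rn0; apply; rewrite -lead_coef_eq0 /lead_coef.
by rewrite h.
Qed.

Lemma io_inj c d : io c = io d -> c = d.
Proof. by move=> e; apply/eqP; rewrite -subr_eq0; apply/eqP/io_eq0; rewrite ioB e subrr. Qed.

Lemma polyC_reg (c : A) (p : {poly A}) : c <> 0 -> c%:P * p = 0 -> p = 0.
Proof.
move=> c0 e; apply/polyP => i; rewrite coef0.
have := congr1 (fun q : {poly A} => q`_i) e; rewrite /= coefCM coef0.
by case/(z_mul_eq0 Adom).
Qed.

Lemma fa_reg y : io a * y = 0 -> y = 0.
Proof.
have [q <-] := fsurj y.
rewrite /io -rmorphM => /fker [r e].
have hr : forall i, divides a r`_i.
  move=> i; have := ker_coef i e; rewrite coefCM => ei.
  have h1 : divides a (b * r`_i).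
    exists ((if i == 0%N then 0 else r`_i.-1) - q`_i).
    by rewrite mulrBr ei; ring.
  have h2 : divides b (b * r`_i) by apply: z_dvd_mul_r.
  have [z ez] := proj1 (cop _) (conj h1 h2).
  exists z; apply: (z_mulIf Adom b0).
  by rewrite ez; ring.
have [r' er] := coef_dvd_poly hr.
apply/fker; exists r'.
apply/eqP; rewrite -subr_eq0; apply/eqP; apply: (polyC_reg a0).
by rewrite mulrBr e er mulrA subrr.
Qed.

Lemma faX_reg n y : io a ^+ n * y = 0 -> y = 0.
Proof.
elim: n y => [|n IH] y; first by rewrite expr0 mul1r.
by rewrite exprS -mulrA => /fa_reg /IH.
Qed.

Lemma pow_image y : exists n c, io a ^+ n * y = io c.
Proof.
have [q <-] := fsurj y.
elim/poly_ind: q => [|p d [n [c IH]]]; first by exists 0%N, 0; rewrite rmorph0 mulr0 io0.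
exists n.+1, (c * b + a ^+ n.+1 * d).
rewrite rmorphD rmorphM ioD ioM ioM ioX -IH -axb -/xx -/(io d).
rewrite mulrDr; congr (_ + _).
by rewrite exprSr !mulrA; congr (_ * _); rewrite -!mulrA; congr (_ * _); rewrite mulrC.
Qed.

Lemma B_dom : is_domain B.
Proof.
split; first by apply/eqP; apply: oner_neq0.
move=> y z e.
have [n [c ec]] := pow_image y.
have [m [d ed]] := pow_image z.
have : io (c * d) = 0.
  by rewrite ioM -ec -ed mulrACA e mulr0.
move=> /io_eq0 /(z_mul_eq0 Adom) [c0|d0].
- by left; apply: (faX_reg (n := n)); rewrite ec c0 io0.
- by right; apply: (faX_reg (n := m)); rewrite ed d0 io0.
Qed.

Lemma io_dvd c d : divides (io c) (io d) -> exists k, divides c (a ^+ k * d).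
Proof.
move=> [w ew]; have [k [e ee]] := pow_image w.
exists k; exists e; apply: io_inj.
by rewrite ioM ioM ioX ew mulrCA ee.
Qed.


Lemma io_unit c : unitP c -> unitP (io c).
Proof. by move=> [u hu]; exists (io u); rewrite -ioM hu io1. Qed.

Hypothesis hii : forall p : A, prime_elt p -> divides p a ->
     ~ (exists u v : A, p * u + b * v = 1) ->
     prime_ideal (fun x : A => exists u v : A, x = p * u + b * v).

Lemma prime_or_unit p : prime_elt p -> divides p a -> unitP (io p) \/ prime_elt (io p).
Proof.
move=> pp pa; have [a' ea'] := pa.
case: (classic (exists u v : A, p * u + b * v = 1)) => [[u [v euv]]|nuv].
  left; exists (io u + io a' * xx * io v).
  rewrite mulrDr -ioM !mulrA -ioM -ea' axb -ioM -ioD euv io1 //.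
have hP := hii pp pa nuv.
set P := fun x : A => _ in hP.
have dchar q : divides (io p) (f q) <-> forall i, P q`_i.
  split.
  - move=> [w0 ew]; have [w ew0] := fsurj w0; rewrite -ew0 in ew.
    have [|r er] := proj1 (fker (q - p%:P * w)); first by rewrite rmorphB rmorphM ew -/(io p) subrr.
    move=> i; have := ker_coef i er; rewrite coefB coefCM => ei.
    exists (w`_i + (if i == 0%N then 0 else r`_i.-1) * a'), (- r`_i).
    have -> : q`_i = (q`_i - p * w`_i) + p * w`_i by rewrite subrK.
    by rewrite ei ea'; ring.
  - move=> H; have [U [V e]] := coef_comb_poly H.
    exists (f U + io a' * xx * f V).
    by rewrite e rmorphD !rmorphM -/(io p) -/(io b) -axb ea' ioM; ring.
right; split.
- by move=> /io_eq0 p0; case: pp => /(_ p0).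
- move=> [w ew]; have [q eq] := fsurj w.
  have [|r er] := proj1 (fker (p%:P * q - 1)); first by rewrite rmorphB rmorphM rmorph1 eq ew subrr.
  have := ker_coef 0 er; rewrite coefB coefCM coefC /= mul0r sub0r => e0.
  case: hP => _ P1 _; apply: P1; exists q`_0, r`_0.
  by rewrite -(subrK 1 (p * q`_0)) e0; ring.
- move=> y z; have [q1 <-] := fsurj y; have [q2 <-] := fsurj z.
  rewrite -rmorphM => /dchar /(gauss_prime hP) [h|h]; [left|right]; exact/dchar.
Qed.


Lemma aN_neq0 N : io a ^+ N <> 0.
Proof.
move=> h; have : io a ^+ N * 1 = 0 by rewrite mulr1.
by move/faX_reg => /eqP; rewrite oner_eq0.
Qed.

Lemma prime_dvd_pow (r : A) k : prime_elt r -> divides r (a ^+ k) -> divides r a.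
Proof.
move=> pr; elim: k => [|k IH].
  by rewrite expr0 => /z_unit_dvd1 h; case: pr => _ /(_ h).
by rewrite exprS; case: (pr) => _ _ /[apply] -[|/IH].
Qed.

Hypothesis UA : UFD A.
Variables (sa : seq A) (ua : A).
Hypothesis sprime : forall p, p \in sa -> prime_elt p.
Hypothesis uaU : unitP ua.
Hypothesis ea : a = ua * \prod_(p <- sa) p.

Lemma sdiv p : p \in sa -> divides p a.
Proof. by move=> ps; rewrite ea; apply: z_dvd_mull; apply: z_mem_dvd_prod. Qed.

Lemma spu p : p \in sa -> unitP (io p) \/ prime_elt (io p).
Proof. by move=> ps; apply: prime_or_unit; [apply: sprime|apply: sdiv]. Qed.

Inductive APow : B -> Prop :=
| AP_unit d : unitP d -> APow d
| AP_cons p d : p \in sa -> APow d -> APow (io p * d).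

Lemma APow_unit u d : unitP u -> APow d -> APow (u * d).
Proof.
move=> hu; elim=> [d' hd|p d' ps _ IH]; first by apply: AP_unit; apply: z_unitM.
by rewrite mulrCA; apply: AP_cons.
Qed.

Lemma APow_prod (t : seq A) d : (forall p, p \in t -> p \in sa) -> APow d ->
  APow ((\prod_(p <- t) io p) * d).
Proof.
elim: t => [|p t IH] ht hd; first by rewrite big_nil mul1r.
rewrite big_cons -mulrA; apply: AP_cons; first by apply: ht; apply: mem_head.
by apply: IH => // r rt; apply: ht; rewrite inE rt orbT.
Qed.

Lemma APow_pow N : APow (io a ^+ N).
Proof.
elim: N => [|N IH]; first by apply: AP_unit; rewrite expr0; apply: z_unit1.
rewrite exprS {1}ea ioM io_prod -mulrA; apply: APow_unit; first by apply: io_unit.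
by apply: APow_prod.
Qed.

Lemma APow_split d : APow d -> forall pi g h, d * pi = g * h ->
  exists g' h' d1 e1, [/\ pi = g' * h', g = d1 * g', h = e1 * h' & d1 * e1 = d].
Proof.
elim=> [d0 [v hv]|p d0 ps _ IH] pi g h e.
  exists (v * g), h, d0, 1; split => //; rewrite ?mul1r ?mulr1 //.
  - by rewrite -mulrA -e mulrA [v * d0]mulrC hv mul1r.
  - by rewrite mulrA hv mul1r.
case: (spu ps) => [[w hw]|pp].
  have [|g' [h' [d1 [e1 [e1' e2 e3 e4]]]]] := IH pi (w * g) h.
    by rewrite -mulrA -e !mulrA [w * io p]mulrC hw mul1r.
  exists g', h', (io p * d1), e1; split => //; last by rewrite -mulrA e4.
  by rewrite -mulrA -e2 mulrA hw mul1r.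
have Bd := B_dom.
have p0 : io p <> 0 by case: pp.
have : divides (io p) (g * h) by rewrite -e -mulrA; apply: z_dvd_mul_r.
case: (pp) => _ _ /[apply] -[[g1 eg]|[h1 eh]].
- have [|g' [h' [d1 [e1 [e1' e2 e3 e4]]]]] := IH pi g1 h.
    by apply: (z_mulIf Bd p0); rewrite mulrA e eg mulrA.
  exists g', h', (io p * d1), e1; split => //; last by rewrite -mulrA e4.
  by rewrite eg e2 mulrA.
- have [|g' [h' [d1 [e1 [e1' e2 e3 e4]]]]] := IH pi g h1.
    by apply: (z_mulIf Bd p0); rewrite mulrA e eh mulrCA.
  exists g', h', d1, (io p * e1); split => //; last by rewrite mulrCA e4.
  by rewrite eh e3 mulrA.
Qed.

Lemma APow_split_irr d pi g h : APow d -> irreducible_elt pi -> d * pi = g * h ->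
  divides g d \/ divides h d.
Proof.
move=> hd [_ _ pii] e.
have [g' [h' [d1 [e1 [e1' e2 e3 e4]]]]] := APow_split hd e.
case: (pii _ _ e1') => [[v hv]|[v hv]].
- left; exists (v * e1).
  by rewrite e2 -e4 mulrA -[d1 * g' * v]mulrA hv mulr1.
- right; exists (v * d1).
  by rewrite e3 -e4 mulrA -[e1 * h' * v]mulrA hv mulr1 mulrC.
Qed.


Lemma APow_cancel pi : (forall p, p \in sa -> prime_elt (io p) -> ~ divides (io p) pi) ->
  forall d, APow d -> forall y, divides pi (d * y) -> divides pi y.
Proof.
move=> C2 d; elim=> [d0 [v hv]|p d0 ps _ IH] y.
  move=> [w ew]; exists (v * w); rewrite mulrCA -ew mulrA [v * d0]mulrC hv mul1r //.
move=> h; apply: IH; move: h; rewrite -mulrA; move: (d0 * y) => Y [w ew].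
case: (spu ps) => [[u hu]|pp].
  by exists (u * w); rewrite mulrCA -ew mulrA [u * io p]mulrC hu mul1r.
have : divides (io p) (pi * w) by rewrite -ew; apply: z_dvd_mul_r.
case: (pp) => p0 _ /[apply] -[/(C2 _ ps pp)//|[w' ew']].
exists w'; apply: (z_mulIf B_dom p0).
by rewrite ew ew' mulrCA.
Qed.

Lemma a_prime (r : A) : prime_elt r -> divides r a ->
  exists p, p \in sa /\ exists v, unitP v /\ r = v * p.
Proof.
move=> pr; rewrite ea; case: (pr) => r0 ru rp /rp [/z_dvd_unit /(_ uaU) //|].
move=> /(z_prime_dvd_prod pr) [p ps [w ew]].
exists p; split => //.
have [_ _ pii] := z_prime_irr Adom (sprime ps).
case: (pii _ _ ew) => [/ru //|[v hv]].
by exists v; split; [exists w; rewrite mulrC|rewrite ew mulrCA [v * w]mulrC hv mulr1].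
Qed.

Section Irr.
Variable pi : B.
Hypothesis piirr : irreducible_elt pi.
Hypothesis C2 : forall p, p \in sa -> prime_elt (io p) -> ~ divides (io p) pi.

Lemma S_lemma (L : seq A) : (forall r, r \in L -> prime_elt r) ->
  forall d, (exists N, divides d (io a ^+ N)) -> d * pi = \prod_(r <- L) io r ->
  exists r, [/\ prime_elt r, ~ divides r a, divides pi (io r) &
                exists M, divides (io r) (io a ^+ M * pi)].
Proof.
have Bd := B_dom.
elim: L => [|r L IH] hL d [N hN] e.
  by exfalso; case: piirr => _ pu _; apply: pu; exists d; rewrite mulrC e big_nil.
have hL' : forall r0, r0 \in L -> prime_elt r0 by move=> r0 h; apply: hL; rewrite inE h orbT.
have rp : prime_elt r by apply: hL; apply: mem_head.
rewrite big_cons in e.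
case: (classic (divides r a)) => [ra|nra].
- have [p [ps [v [[v' hv'] ev]]]] := a_prime rp ra.
  have iv : io v * io v' = 1 by rewrite -ioM hv' io1.
  case: (spu ps) => [[w hw]|pp].
  + apply: (IH hL' (w * io v' * d)).
      exists N; apply: (z_dvd_trans (y := d)) => //; exists (io p * io v).
      have -> : w * io v' * d * (io p * io v) = (io p * w) * (io v * io v') * d by ring.
      by rewrite hw iv !mul1r.
    rewrite -mulrA e ev ioM.
    have -> : w * io v' * (io v * io p * \prod_(j <- L) io j) =
              (io v * io v') * (io p * w) * \prod_(j <- L) io j by ring.
    by rewrite iv hw !mul1r.
  + have : divides (io p) (d * pi).
      by rewrite e ev ioM -mulrA; apply: z_dvd_mull; apply: z_dvd_mul_r.
    case: (pp) => p0 _ /[apply] -[[d'' ed]|/(C2 ps pp)//].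
    apply: (IH hL' (io v' * d'')).
      exists N; apply: (z_dvd_trans (y := d)) => //; exists (io p * io v).
      have -> : io v' * d'' * (io p * io v) = (io v * io v') * (io p * d'') by ring.
      by rewrite iv mul1r ed.
    have : io p * (d'' * pi) = io p * (io v * \prod_(j <- L) io j).
      by rewrite mulrA -ed e ev ioM -!mulrA mulrCA.
    move=> /(z_mulIf Bd p0) e2.
    by rewrite -mulrA e2 mulrA [io v' * io v]mulrC iv mul1r.
- have [e' ee'] := hN.
  have hA : io a ^+ N * pi = io r * (e' * \prod_(j <- L) io j).
    by rewrite ee' [d * e']mulrC -mulrA e mulrCA.
  case: (APow_split_irr (APow_pow N) piirr hA) => [hr|[w ew]].
  + exfalso; apply: nra; rewrite -ioX in hr; have [k hk] := io_dvd hr.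
    by apply: (prime_dvd_pow (k := (k + N)%N)); rewrite // exprD.
  + exists r; split => //; last by exists N; rewrite hA; apply: z_dvd_mul_r.
    exists w; apply: (z_mulIf Bd (x := e' * \prod_(j <- L) io j)).
      by move=> h0; apply: (aN_neq0 (N := N)); rewrite ew h0 mul0r.
    by rewrite mulrCA -ew [pi * _]mulrC hA mulrC.
Qed.
End Irr.

Lemma io_dvd' (r c : A) : divides r c -> divides (io r) (io c).
Proof. by move=> [w ->]; exists (io w); rewrite ioM. Qed.

Lemma irr_prime_B (pi : B) : irreducible_elt pi -> prime_elt pi.
Proof.
move=> piirr.
case: (classic (exists p : A, p \in sa /\ prime_elt (io p) /\ divides (io p) pi)) =>
  [[p [ps [pp [w ew]]]]|nC].
  case: (piirr) => _ _ pii; case: (pii _ _ ew) => [hu|wu].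
    by exfalso; case: pp => _ /(_ hu).
  by rewrite ew mulrC; apply: (z_prime_assoc B_dom).
have C2 : forall p, p \in sa -> prime_elt (io p) -> ~ divides (io p) pi.
  by move=> p ps pp h; apply: nC; exists p.
have Bd := B_dom.
case: (piirr) => pi0 piu _; split => // y z [w e].
have [n [c ec]] := pow_image pi.
have c0 : c <> 0.
  by move=> c0; apply: pi0; apply: (faX_reg (n := n)); rewrite ec c0 io0.
have cu : ~ unitP c.
  move=> [u hu]; apply: piu; exists (io a ^+ n * io u).
  by rewrite mulrA [pi * _]mulrC ec -ioM hu io1.
case: (UA) => _ fex _.
have [L [hL eL]] := fex c c0 cu.
have hL' : forall r, r \in L -> prime_elt r.
  by move=> r h; apply: (ufd_irr_prime Adom UA); apply: hL.
have hN : exists N, divides (io a ^+ n) (io a ^+ N) by exists n; apply: z_dvd_refl.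
have hE : io a ^+ n * pi = \prod_(r <- L) io r by rewrite ec eL io_prod.
have [r [rp nra pir [M hM]]] := S_lemma piirr C2 hL' hN hE.
have [k [y' ey]] := pow_image y.
have [l [z' ez]] := pow_image z.
have : divides (io r) (io (a ^+ M * y' * z')).
  rewrite !ioM ioX -ey -ez; apply: (z_dvd_trans hM).
  exists (io a ^+ k * io a ^+ l * w).
  have -> : io a ^+ M * (io a ^+ k * y) * (io a ^+ l * z) =
            io a ^+ M * (io a ^+ k * io a ^+ l) * (y * z) by ring.
  by rewrite e; ring.
move=> /io_dvd [j hj]; rewrite !mulrA in hj.
case: (rp) => _ _ rp'.
have hy : divides r y' -> divides pi y.
  move=> /io_dvd'; rewrite -ey => h.
  by apply: (APow_cancel C2 (APow_pow k)); apply: z_dvd_trans h.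
have hz : divides r z' -> divides pi z.
  move=> /io_dvd'; rewrite -ez => h.
  by apply: (APow_cancel C2 (APow_pow l)); apply: z_dvd_trans h.
case: (rp' _ _ hj) => [|/hz]; last by right.
case/rp' => [h|/hy]; last by left.
by exfalso; apply: nra; apply: (prime_dvd_pow (k := (j + M)%N)); rewrite // exprD.
Qed.

Lemma B_UFD : noetherian B -> UFD B.
Proof.
move=> nB; have Bd := B_dom; split => //.
- by apply: fact_exists.
- move=> s t hs ht e.
  apply: (uniq_fact Bd irr_prime_B (u := 1)) => //; first by apply: z_unit1.
  by rewrite mul1r.
Qed.

End Main.


Lemma noeth_surj (R S : comNzRingType) (g : {rmorphism R -> S}) :
  noetherian R -> (forall y, exists x, g x = y) -> noetherian S.
Proof.
move=> nR gs J hJ.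
have hI : is_ideal (fun x => J (g x)).
  case: (hJ) => J0 JD JM; split; first by rewrite rmorph0.
  - by move=> x y hx hy; rewrite rmorphD; apply: JD.
  - by move=> r x hx; rewrite rmorphM; apply: JM.
have [s hs] := nR _ hI.
exists (map g s) => y; split.
- have [x <-] := gs y; move=> /hs.
  apply: (z_gen_ideal_min (J := fun x => gen_ideal (map g s) (g x))).
  + have [G0 GD GM] := z_gen_ideal_ideal (map g s); split; first by rewrite rmorph0.
    * by move=> x1 y1 h1 h2; rewrite rmorphD; apply: GD.
    * by move=> r x1 h1; rewrite rmorphM; apply: GM.
  + by move=> x1 h1; apply: z_gen_ideal_mem; apply: map_f.
- apply: z_gen_ideal_min => // z /mapP [x xs ->].
  by apply/hs; apply: z_gen_ideal_mem.
Qed.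
Unset Implicit Arguments.

Theorem corollary3p5 (A : comNzRingType) (a b : A) :
  noetherian A -> UFD A ->
  (* (i) *)
  a <> 0 -> b <> 0 ->
  (forall x : A, (divides a x /\ divides b x) <-> divides (a * b) x) ->
  (unitP a \/ exists s : seq A, (forall p, p \in s -> prime_elt p) /\
                                a = \prod_(p <- s) p) ->
  (* (ii) *)
  (forall p : A, prime_elt p -> divides p a ->
     ~ (exists u v : A, p * u + b * v = 1) ->
     prime_ideal (fun x : A => exists u v : A, x = p * u + b * v)) ->
  forall (B : comNzRingType) (f : {rmorphism {poly A} -> B}),
    (forall y : B, exists q : {poly A}, f q = y) ->
    (forall q : {poly A}, f q = 0 <-> exists r : {poly A}, q = r * (a%:P * 'X - b%:P)) ->
    noetherian B /\ UFD B.
Proof.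
move=> nA UA a0 b0 cop ha hii B f fsurj fker.
have Adom : is_domain A by case: UA.
have nB : noetherian B := noeth_surj (hbt nA) fsurj.
split => //.
case: ha => [au|[s [hs es]]].
- apply: (B_UFD Adom a0 b0 cop fsurj fker hii UA (sa := [::]) (ua := a)) => //.
  by rewrite big_nil mulr1.
- apply: (B_UFD Adom a0 b0 cop fsurj fker hii UA (sa := s) (ua := 1)) => //.
  + exact: z_unit1.
  + by rewrite mul1r.
Qed.
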